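(* Let $s,t$ be real numbers with $t\ge s>0$, let $n\ge 3$, and let $A=(a_{ij}) \in \mathcal{G}_s^{n\times n}([0,t])$. Then for every $k\in\{2,3,\dots,n-1\}$, $$\Big| (a_{11}a_{2k} - s\,a_{1k})\,H_{k+1}(A) - (a_{11}a_{2,k+1} - s\,a_{1,k+1})\, s\, H_{k+2}(A)\Big| \le t^2 M_{n-k} + t s^2 M_{n-k-1},$$ and, if $n$ is even, $$\big| (a_{11}a_{2n} - s\,a_{1n})\,H_{n+1}(A)\big| \le t^2 M_0.$$
   Context: For a real number $s$, a positive integer $n$ and a set $P \subseteq \mathbb{R}$, $\mathcal{G}_s^{n\times n}(P)$ denotes the set of all $n\times n$ real upper Hessenberg matrices $A=(a_{ij})$ with $a_{i+1,i} = s$ for $1\le i\le n-1$, $a_{ij}=0$ for $i > j+1$, and $a_{ij}\in P$ for all $i \le j$. For $m\ge 1$, $M_m$ is the maximum of $|\det B|$ over $B\in\mathcal{G}_s^{m\times m}([0,t])$, and $M_0 := 1$. For an $n\times n$ matrix $A$ and $1\le k\le n$, $H_k(A)$ is the determinant of the bottom-right $(n+1-k)\times(n+1-k)$ submatrix of $A$ (rows and columns $k,\dots,n$), and $H_{n+1}(A):=1$. *)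

(* Defs.v *)
From HB Require Import structures.
From mathcomp Require Import all_boot all_order all_algebra.
From mathcomp Require Import boolp classical_sets reals.
Set Implicit Arguments. Unset Strict Implicit. Unset Printing Implicit Defensive.
Import Order.TTheory GRing.Theory Num.Theory.
Local Open Scope ring_scope.
Local Open Scope classical_set_scope.

(* 1-based entry access: entry A i j = a_{ij} for 1 <= i, j <= n (0 otherwise). *)
Definition entry (R : realType) (n : nat) (A : 'M[R]_n) (i j : nat) : R :=
  match @insub nat (fun x => x < n)%N _ i.-1, @insub nat (fun x => x < n)%N _ j.-1 with
  | Some i', Some j' => A (i' : 'I_n) (j' : 'I_n)
  | _, _ => 0
  end.

(* A is in G_s^{n x n}(P): upper Hessenberg, subdiagonal equal to s,
   zero below the subdiagonal, entries on/above diagonal in P.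
   (0-based indices; the relations i = j+1, i > j+1, i <= j are shift-invariant.) *)
Definition inG (R : realType) (s : R) (P : R -> Prop) (n : nat) (A : 'M[R]_n) : Prop :=
  forall i j : 'I_n,
    ((i : nat) = j.+1 -> A i j = s) /\
    ((j.+1 < i)%N -> A i j = 0) /\
    ((i <= j)%N -> P (A i j)).

Definition Mmax (R : realType) (s t : R) (m : nat) : R :=
  if m == 0%N then 1
  else sup [set x | exists B : 'M[R]_m,
                      inG s (fun y => 0 <= y <= t) B /\ x = `|\det B|].

(* H_k(A) = det of the bottom-right submatrix on rows/cols k..n (1-based);
   for k = n+1 this is the empty determinant, equal to 1. *)
Definition Hk (R : realType) (n : nat) (A : 'M[R]_n) (k : nat) : R :=
  if k == n.+1 then 1
  else \det (\matrix_(i < n.+1 - k, j < n.+1 - k) entry A (i + k)%N (j + k)%N).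

(* Main.v *)
Require Import Defs.
From HB Require Import structures.
From mathcomp Require Import all_boot all_order all_algebra.
From mathcomp Require Import boolp classical_sets reals.
From mathcomp Require Import ring lra perm zify.
Import Order.TTheory GRing.Theory Num.Theory.
Set Implicit Arguments. Unset Strict Implicit. Unset Printing Implicit Defensive.
Local Open Scope ring_scope.

Definition mat (R : realType) (F : nat -> nat -> R) (m : nat) : 'M[R]_m :=
  \matrix_(i < m, j < m) F i j.

Lemma eq_mat (R : realType) (F G : nat -> nat -> R) m :
  (forall i j, (i < m)%N -> (j < m)%N -> F i j = G i j) -> mat F m = mat G m.
Proof. by move=> H; apply/matrixP => i j; rewrite !mxE H. Qed.

Lemma lift1E n (i : 'I_n.+1) : (lift (lift ord0 (@ord0 n)) i : nat) = if i == 0%N :> nat then 0%N else i.+1.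
Proof. by case: i => [[|i] ?]. Qed.

Lemma expand (R : realType) (F : nat -> nat -> R) m :
  (forall i, (i < m)%N -> F i.+2 0%N = 0) ->
  \det (mat F m.+2) = F 0%N 0%N * \det (mat (fun i j => F i.+1 j.+1) m.+1)
     - F 1%N 0%N * \det (mat (fun i j => F (if i == 0%N then 0%N else i.+1) j.+1) m.+1).
Proof.
move=> HF.
rewrite (expand_det_col _ ord0) big_ord_recl big_ord_recl big1; last first.
  by move=> i _; rewrite /mat mxE !lift0 HF ?mul0r.
rewrite addr0 /cofactor /= expr0 mul1r expr1 /mat !mxE /= mulN1r mulrN.
have -> : bump 0 0 = 1%N by [].
have -> : row' ord0 (col' ord0 (\matrix_(i, j) F i j)) = \matrix_(i < m.+1, j < m.+1) F i.+1 j.+1.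
  by apply/matrixP => i j; rewrite !mxE !lift0.
have -> : row' (lift ord0 ord0) (col' ord0 (\matrix_(i, j) F i j)) = \matrix_(i < m.+1, j < m.+1) F (if (i : nat) == 0%N then 0%N else i.+1) j.+1.
  by apply/matrixP => i j; rewrite !mxE lift0 lift1E.
by [].
Qed.

Definition hessF (R : realType) (s t : R) (F : nat -> nat -> R) (m : nat) :=
  forall i j, (i < m)%N -> (j < m)%N ->
    (i = j.+1 -> F i j = s) /\ ((j.+1 < i)%N -> F i j = 0) /\ ((i <= j)%N -> 0 <= F i j <= t).

Lemma hessF_inG (R : realType) (s t : R) F m :
  hessF s t F m -> inG s (fun y => 0 <= y <= t) (mat F m).
Proof. by move=> H i j; rewrite /mat !mxE; apply: H. Qed.

Lemma entryE (R : realType) n (A : 'M[R]_n) a b (ha : (a.-1 < n)%N) (hb : (b.-1 < n)%N) :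
  entry A a b = A (Ordinal ha) (Ordinal hb).
Proof.
rewrite /entry (insubT (fun x => x < n)%N ha) (insubT (fun x => x < n)%N hb) /=.
by congr (A _ _); apply: val_inj.
Qed.

Lemma entry_ord (R : realType) n (A : 'M[R]_n) (i j : 'I_n) :
  entry A i.+1 j.+1 = A i j.
Proof. by rewrite (@entryE _ _ A i.+1 j.+1 (ltn_ord i) (ltn_ord j)); congr (A _ _); apply: val_inj. Qed.

Lemma entry_ge (R : realType) (s t : R) n (A : 'M[R]_n) a b :
  inG s (fun y => 0 <= y <= t) A -> (1 <= a)%N -> (a <= b)%N -> (b <= n)%N ->
  0 <= entry A a b <= t.
Proof.
move=> HA a1 ab bn.
have ha : (a.-1 < n)%N by rewrite prednK //; apply: leq_trans ab bn.
have hb : (b.-1 < n)%N by rewrite prednK //; apply: leq_trans ab.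
rewrite (entryE A ha hb); have [_ [_ H]] := HA (Ordinal ha) (Ordinal hb).
apply: H => /=; by rewrite -!subn1 leq_sub2r.
Qed.

Lemma hess_shift (R : realType) (s t : R) F m :
  hessF s t F m.+2 -> hessF s t (fun i j => F i.+1 j.+1) m.+1 /\
    hessF s t (fun i j => F (if i == 0%N then 0%N else i.+1) j.+1) m.+1.
Proof.
move=> H; split=> i j hi hj.
  have [h1 [h2 h3]] := H i.+1 j.+1 hi hj.
  by split; [move=> e; apply: h1; rewrite e | split; [move=> e; apply: h2|apply: h3]].
case: i hi => [|i] hi /=.
  have [h1 [h2 h3]] := H 0%N j.+1 (ltn0Sn _) hj.
  by split=> //; split=> // _; apply: h3.
have [h1 [h2 h3]] := H i.+2 j.+1 hi hj.
by split; [move=> e; apply: h1; rewrite e | split; [move=> e; apply: h2|apply: h3]].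
Qed.

Lemma hess_window (R : realType) (s t : R) n (A : 'M[R]_n) k :
  inG s (fun y => 0 <= y <= t) A -> (k < n)%N ->
  hessF s t (fun i j => entry A (i + k.+1) (j + k.+1)) (n - k).
Proof.
move=> HA kn i j hi hj.
have ha : ((i + k.+1).-1 < n)%N by rewrite addnS /=; clear -hi; lia.
have hb : ((j + k.+1).-1 < n)%N by rewrite addnS /=; clear -hj; lia.
rewrite (entryE A ha hb).
have [h1 [h2 h3]] := HA (Ordinal ha) (Ordinal hb).
have vi : nat_of_ord (Ordinal ha) = (i + k)%N by rewrite /= addnS.
have vj : nat_of_ord (Ordinal hb) = (j + k)%N by rewrite /= addnS.
rewrite vi vj in h1 h2 h3.
split; first by move=> e; apply: h1; rewrite e.
split; [move=> h; apply: h2 | move=> h; apply: h3]; clear -h; lia.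
Qed.

Lemma entry_abs (R : realType) (s t : R) m (B : 'M[R]_m) :
  0 < s -> s <= t -> inG s (fun y => 0 <= y <= t) B -> forall i j, `|B i j| <= t.
Proof.
move=> s0 st HB i j; have [h1 [h2 h3]] := HB i j.
have t0 : 0 < t by apply: lt_le_trans st.
case: (ltngtP i j.+1) => c.
- by have /andP[b0 bt] := h3 c; rewrite ger0_norm.
- by rewrite h2 // normr0 ltW.
- by rewrite h1 // gtr0_norm.
Qed.

Lemma det_bound (R : realType) (s t : R) m (B : 'M[R]_m) :
  0 < s -> s <= t -> inG s (fun y => 0 <= y <= t) B ->
  `|\det B| <= (t ^+ m) *+ m`!.
Proof.
move=> s0 st HB.
have t0 : 0 < t by apply: lt_le_trans st.
rewrite /determinant; apply: le_trans (ler_norm_sum _ _ _) _.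
rewrite -(card_Sn m) -sumr_const; apply: ler_sum => p _.
rewrite normrM normrX normrN1 expr1n mul1r normr_prod.
rewrite -[X in t ^+ X](card_ord m) -prodr_const; apply: ler_prod => i _.
by rewrite normr_ge0 /= (entry_abs s0 st HB).
Qed.

Lemma Mmax_ge (R : realType) (s t : R) m (B : 'M[R]_m) :
  0 < s -> s <= t -> inG s (fun y => 0 <= y <= t) B -> `|\det B| <= Mmax s t m.
Proof.
move=> s0 st HB; rewrite /Mmax; case: eqP => [e|_].
  by subst m; rewrite det_mx00 normr1.
apply: ub_le_sup; last by exists B.
exists ((t ^+ m) *+ m`!) => x [B' [HB' ->]].
exact: det_bound s0 st HB'.
Qed.

Lemma Mmax_mono (R : realType) (s t : R) m :
  0 < s -> s <= t -> t * Mmax s t m <= Mmax s t m.+1.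
Proof.
move=> s0 st; have t0 : 0 < t by apply: lt_le_trans st.
case: m => [|m].
  have -> : Mmax s t 0 = 1 by [].
  have H : hessF s t (fun _ _ => t) 1.
    by move=> [|i] [|j] //= _ _; split=> //; split=> //; rewrite lexx ltW.
  have := Mmax_ge s0 st (hessF_inG H).
  by rewrite det_mx11 /mat mxE gtr0_norm // mulr1.
have -> : Mmax s t m.+1 = sup [set x | exists B : 'M[R]_m.+1,
                      inG s (fun y => 0 <= y <= t) B /\ x = `|\det B|] by [].
rewrite mulrC -ler_pdivlMr //.
apply: ge_sup.
  have H0 : hessF s t (fun i j => if i == j.+1 then s else 0) m.+1.
    move=> i j _ _; split; first by move=> ->; rewrite eqxx.
    split; first by move=> h; rewrite ifN //; apply/eqP => e; move: h; rewrite e ltnn.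
    move=> h; rewrite ifN; first by rewrite lexx ltW.
    by apply/eqP => e; move: h; rewrite e ltnn.
  by exists `|\det (mat (fun i j => if i == j.+1 then s else 0) m.+1)|; exists (mat (fun i j => if i == j.+1 then s else 0) m.+1); split => //; apply: hessF_inG.
move=> x [B [HB ->]]; rewrite ler_pdivlMr // mulrC.
pose Fp := fun i j : nat => if i == 0%N then (if j == 0%N then t else 0)
   else if j == 0%N then (if i == 1%N then s else 0) else entry B i j.
have HFp : hessF s t Fp m.+2.
  move=> [|i] [|j] hi hj; rewrite /Fp /=.
  - by split=> //; split=> //; rewrite lexx ltW.
  - by split=> //; split=> //; rewrite lexx ltW.
  - by split; [move=> [->] | split=> // h; case: i h hi].
  - have hi' : (i < m.+1)%N by []. have hj' : (j < m.+1)%N by [].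
    rewrite -[i.+1]/((Ordinal hi').+1) -[j.+1]/((Ordinal hj').+1) entry_ord.
    have [h1 [h2 h3]] := HB (Ordinal hi') (Ordinal hj').
    split; first by move=> [e]; apply: h1.
    by split; [move=> h; apply: h2 | move=> h; apply: h3].
have := Mmax_ge s0 st (hessF_inG HFp).
rewrite expand // /Fp /=.
have -> : mat (fun i j => entry B i.+1 j.+1) m.+1 = B.
  by apply/matrixP => i j; rewrite /mat mxE entry_ord.
set G := mat _ m.+1.
have -> : \det G = 0.
  rewrite (expand_det_row _ ord0) big1 // => j _; by rewrite /G /mat mxE mul0r.
by rewrite mulr0 subr0 normrM gtr0_norm.
Qed.
Lemma key (R : realFieldType) (s t M M' h g a b r : R) :
  0 < s -> s <= t -> t * M' <= M -> `|h| <= M' -> `|g| <= M' ->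
  `|r * h - s * g| <= M -> `|t * h - s * g| <= M ->
  -(s * t) <= a <= t ^+ 2 -> -(s * t) <= b <= t ^+ 2 -> 0 <= r <= t ->
  `|a * (r * h - s * g) - s * b * h| <= t ^+ 2 * M + t * s ^+ 2 * M'.
Proof.
move=> s0 st tM hM gM phr pht /andP[a1 a2] /andP[b1 b2] /andP[r0 rt].
have t0 : 0 < t by apply: lt_le_trans st.
have M'0 : 0 <= M' by apply: le_trans hM.
have M0 : 0 <= M by apply: le_trans phr.
have sM : s * M' <= M by apply: le_trans tM; rewrite ler_wpM2r.
have ha : `|a| <= t ^+ 2.
  rewrite ler_norml a2 andbT; apply: le_trans a1; rewrite lerN2 expr2 ler_wpM2r //; lra.
have eq1 : forall x y : R, `|x - y| <= `|x| + `|y|.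
  move=> x y; apply: le_trans (ler_normD _ _) _; by rewrite normrN.
case: (lerP `|b| (s * t)) => hb.
  apply: le_trans (eq1 _ _) _; rewrite !normrM; apply: lerD.
    by apply: ler_pM.
  rewrite (gtr0_norm s0).
  have -> : t * s ^+ 2 * M' = s * (s * t) * M' by rewrite expr2; ring.
  apply: ler_pM => //; first by apply: mulr_ge0; [apply: ltW|].
  by apply: ler_wpM2l => //; apply: ltW.
have bst : s * t < b.
  move: hb; rewrite ltr_normr => /orP[//|]; lra.
case: (ltrP a 0) => a0.
  apply: le_trans (eq1 _ _) _; rewrite !normrM.
  have ha' : `|a| <= s * t by rewrite ltr0_norm //; lra.
  have hb' : `|b| <= t ^+ 2 by rewrite ler_norml b2 andbT; lra.
  apply: (@le_trans _ _ (s * t * M + s * t ^+ 2 * M')).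
    apply: lerD; first by apply: ler_pM.
    have hbh : `|b| * `|h| <= t ^+ 2 * M' by apply: ler_pM.
    rewrite (gtr0_norm s0) -[s * `|b| * _]mulrA -[s * t ^+ 2 * M']mulrA.
    by apply: ler_wpM2l => //; apply: ltW.
  have : 0 <= t * (t - s) * (M - s * M').
    apply: mulr_ge0; [apply: mulr_ge0; lra | lra].
  rewrite !expr2; nra.
case: (lerP (s * b) (a * r)) => abr.
  set lt := (a * r - s * b) / t.
  set l0 := (a * (t - r) + s * b) / t.
  have -> : a * (r * h - s * g) - s * b * h = lt * (t * h - s * g) + l0 * (- (s * g)).
    rewrite /lt /l0; field; lra.
  have lt0 : 0 <= lt by rewrite /lt divr_ge0; lra.
  have l00 : 0 <= l0 by rewrite /l0 divr_ge0 //; try lra; apply: addr_ge0; [apply: mulr_ge0; lra|nra].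
  have sg : `|- (s * g)| <= M.
    rewrite normrN normrM (gtr0_norm s0); apply: (le_trans _ sM); apply: ler_wpM2l => //; exact: ltW.
  apply: le_trans (ler_normD _ _) _; rewrite (normrM lt) (normrM l0) (ger0_norm lt0) (ger0_norm l00).
  apply: (@le_trans _ _ (lt * M + l0 * M)).
    by apply: lerD; apply: ler_wpM2l.
  have -> : lt * M + l0 * M = a * M by rewrite /lt /l0; field; lra.
  have : 0 <= t * s ^+ 2 * M' by apply: mulr_ge0 => //; apply: mulr_ge0; [lra | apply: sqr_ge0].
  have : a * M <= t ^+ 2 * M by apply: ler_wpM2r => //.
  lra.
have -> : a * (r * h - s * g) - s * b * h = (a * r - s * b) * h - (a * s) * g by ring.
apply: le_trans (eq1 _ _) _; rewrite !normrM.
apply: (@le_trans _ _ ((s * b - a * r) * M' + (a * s) * M')).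
  apply: lerD.
    rewrite ler0_norm; last lra.
    rewrite opprB; apply: ler_wpM2l => //; lra.
  rewrite (ger0_norm a0) (gtr0_norm s0).
  apply: ler_wpM2l => //; apply: mulr_ge0; lra.
have : (s * b - a * r) * M' + a * s * M' <= 2 * s * t ^+ 2 * M'.
  have : a * r * M' >= 0 by apply: mulr_ge0 => //; apply: mulr_ge0; lra.
  have : s * b * M' <= s * t ^+ 2 * M' by apply: ler_wpM2r => //; apply: ler_wpM2l; lra.
  have : a * s * M' <= s * t ^+ 2 * M' by rewrite [a * s]mulrC; apply: ler_wpM2r => //; apply: ler_wpM2l; lra.
  lra.
have : 2 * s * t ^+ 2 * M' <= t ^+ 2 * (t * M') + t * s ^+ 2 * M'.
  have : 0 <= t * (t - s) ^+ 2 * M' by apply: mulr_ge0 => //; apply: mulr_ge0; [lra| apply: sqr_ge0].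
  have e : t * (t - s) ^+ 2 * M' = t ^+ 2 * (t * M') + t * s ^+ 2 * M' - 2 * s * t ^+ 2 * M' by ring.
  rewrite e; lra.
have : t ^+ 2 * (t * M') <= t ^+ 2 * M by apply: ler_wpM2l => //; apply: sqr_ge0.
lra.
Qed.

Lemma rng (R : realType) (s t p q u : R) : 0 < s -> s <= t ->
  0 <= p <= t -> 0 <= q <= t -> 0 <= u <= t -> -(s * t) <= p * q - s * u <= t ^+ 2.
Proof.
move=> s0 st /andP[p0 pt] /andP[q0 qt] /andP[u0 ut].
have h1 : p * q <= t * t by apply: ler_pM.
have h2 : s * u <= s * t by apply: ler_wpM2l => //; apply: ltW.
have h3 : 0 <= p * q by apply: mulr_ge0.
have h4 : 0 <= s * u by apply: mulr_ge0 => //; apply: ltW.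
rewrite expr2; apply/andP; split; lra.
Qed.

Unset Implicit Arguments.
Theorem lemma3p2 (R : realType) (s t : R) (n : nat) (A : 'M[R]_n) :
  0 < s -> s <= t -> (3 <= n)%N ->
  inG s (fun y => 0 <= y <= t) A ->
  (forall k : nat, (2 <= k)%N -> (k <= n - 1)%N ->
     `| (entry A 1 1 * entry A 2 k - s * entry A 1 k) * Hk A k.+1
        - (entry A 1 1 * entry A 2 k.+1 - s * entry A 1 k.+1) * s * Hk A k.+2 |
     <= t ^+ 2 * Mmax s t (n - k) + t * s ^+ 2 * Mmax s t (n - k - 1))
  /\
  (~~ odd n ->
     `| (entry A 1 1 * entry A 2 n - s * entry A 1 n) * Hk A n.+1 |
     <= t ^+ 2 * Mmax s t 0).
Proof.
move=> s0 st n3 HA.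
have t0 : 0 < t by apply: lt_le_trans st.
have n1 : (1 <= n)%N by apply: leq_trans n3.
split; last first.
  move=> _; rewrite /Hk eqxx mulr1.
  have -> : Mmax s t 0 = 1 by [].
  have n2 : (2 <= n)%N by apply: ltnW.
  have := rng s0 st (@entry_ge _ _ _ _ A 1 1 HA isT isT n1) (@entry_ge _ _ _ _ A 2 n HA isT n2 (leqnn n))
     (@entry_ge _ _ _ _ A 1 n HA isT n1 (leqnn n)).
  move=> /andP[h1 h2].
  have : s * t <= t ^+ 2 by rewrite expr2; apply: ler_wpM2r => //; apply: ltW.
  by move=> h3; rewrite mulr1 ler_norml h2 andbT; lra.
move=> k k2 kn.
have kn' : (k < n)%N by clear -kn n3; lia.
have a11 := entry_ge HA (leqnn 1) (leqnn 1) n1.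
have a1k := @entry_ge _ _ _ _ A 1 k HA isT (ltnW k2) (ltnW kn').
have a2k := @entry_ge _ _ _ _ A 2 k HA isT k2 (ltnW kn').
have a1k1 := @entry_ge _ _ _ _ A 1 k.+1 HA isT (ltnW (ltnW k2)) kn'.
have a2k1 := @entry_ge _ _ _ _ A 2 k.+1 HA isT (ltnW k2) kn'.
have ra := rng s0 st a11 a2k a1k.
have rb := rng s0 st a11 a2k1 a1k1.
set a := _ - s * entry A 1 k.
set b := _ - s * entry A 1 k.+1.
pose F0 := fun i j => entry A (i + k.+1) (j + k.+1).
have HF0 : hessF s t F0 (n - k) by apply: hess_window.
have H1e : Hk A k.+1 = \det (mat F0 (n - k)).
  by rewrite /Hk ifN ?subSS // eqSS; apply/eqP => e; move: kn'; rewrite e ltnn.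
rewrite H1e.
case E: (n - k)%N HF0 => [|[|m]] HF0.
- by move: kn'; rewrite -subn_gt0 E.
- have H2e : Hk A k.+2 = 1 by rewrite /Hk ifT //; apply/eqP; clear -E kn'; lia.
  rewrite H2e det_mx11 /mat mxE.
  have -> : (1 - 1 = 0)%N by [].
  have -> : Mmax s t 0 = 1 by [].
  have -> : a * F0 0%N 0%N - b * s * 1 = a * (F0 0%N 0%N * 1 - s * 0) - s * b * 1 by ring.
  have [_ [_ h3]] := HF0 0%N 0%N isT isT.
  have M1 : t * 1 <= Mmax s t 1 by exact: (Mmax_mono 0 s0 st).
  have Mr := Mmax_ge s0 st (hessF_inG HF0).
  rewrite det_mx11 /mat mxE in Mr.
  apply: key => //; rewrite ?normr1 ?normr0 ?mulr1 ?mulr0 ?subr0 //.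
  - by rewrite gtr0_norm //; apply: le_trans M1; rewrite mulr1.
  - exact: h3.
have H2e : Hk A k.+2 = \det (mat (fun i j => F0 i.+1 j.+1) m.+1).
  rewrite /Hk ifN; last by apply/eqP; clear -E; lia.
  have -> : (n.+1 - k.+2 = m.+1)%N by clear -E; lia.
  congr (\det _); apply/matrixP => i j; by rewrite /mat !mxE /F0 !addSnnS.
rewrite H2e.
have [HF1 HG1] := hess_shift HF0.
have hF00 : forall i, (i < m)%N -> F0 i.+2 0%N = 0.
  by move=> i hi; have [_ [h2 _]] := HF0 i.+2 0%N hi isT; apply: h2.
have F10 : F0 1%N 0%N = s by have [h1 _] := HF0 1%N 0%N isT isT; apply: h1.
rewrite (expand hF00) F10.
have -> : (m.+2 - 1 = m.+1)%N by rewrite subn1.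
set h := \det (mat _ m.+1).
set g := \det (mat _ m.+1).
have -> : a * (F0 0%N 0%N * h - s * g) - b * s * h = a * (F0 0%N 0%N * h - s * g) - s * b * h by ring.
have [_ [_ h3]] := HF0 0%N 0%N isT isT.
pose Ft := fun i j : nat => if j is 0%N then (if i is 0%N then t else F0 i j) else F0 i j.
have HFt : hessF s t Ft m.+2.
  move=> [|i] [|j] hi hj; rewrite /Ft /=.
  - by split=> //; split=> //; rewrite lexx ltW.
  - exact: HF0.
  - exact: HF0.
  - exact: HF0.
have hFt0 : forall i, (i < m)%N -> Ft i.+2 0%N = 0 by move=> i hi; rewrite /Ft /= hF00.
have Mt := Mmax_ge s0 st (hessF_inG HFt).
have e1 : mat (fun i j => Ft i.+1 j.+1) m.+1 = mat (fun i j => F0 i.+1 j.+1) m.+1.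
  by apply: eq_mat.
have eqG : mat (fun i j => Ft (if i == 0%N then 0%N else i.+1) j.+1) m.+1 =
           mat (fun i j : nat => F0 (if i == 0%N then 0%N else i.+1) j.+1) m.+1.
  by apply: eq_mat.
have e00 : Ft 0%N 0%N = t by [].
have e10 : Ft 1%N 0%N = s by exact: F10.
rewrite (expand hFt0) e1 e00 e10 in Mt.
rewrite eqG -/g -/h in Mt.
have Mr := Mmax_ge s0 st (hessF_inG HF0).
rewrite (expand hF00) F10 -/g -/h in Mr.
apply: key => //.
- exact: Mmax_mono.
- exact: Mmax_ge s0 st (hessF_inG HF1).
- exact: Mmax_ge s0 st (hessF_inG HG1).
- exact: h3.
Qed.
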